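(* Let $\delta_1=b-d>0$, $\delta_2=c-a>0$, $\delta=\delta_1+\delta_2$, $s^*=\delta_1/\delta$, $\gamma=s^*(1-s^* )$, let $p\in[0,1]$ and $\tau\ge 0$, and consider the replicator dynamics with discrete delays $$\frac{ds(t)}{dt}=s(t)(1-s(t))\big(- p\, \delta\, s(t-\tau)-(1-p)\, \delta\, s(t)+\delta_1\big).$$ Then: (i) if $p\le 0.5$, the mixed equilibrium $s^*$ is (locally) asymptotically stable for every value of $\tau\ge 0$; (ii) if $p>0.5$, a Hopf bifurcation of the equilibrium $s^*$ occurs at $\tau=\tau_{cr}$, where $$\tau_{cr}=\frac{\arccos\!\big(-\frac{1-p}{p}\big)}{\delta\gamma \sqrt{2p-1}},$$ with $\arccos$ taking values in $[0,\pi]$.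
   Context: Two-strategy evolutionary game with payoff matrix $\begin{pmatrix} a&b\\ c&d\end{pmatrix}$; $s(t)\in[0,1]$ is the fraction of the population playing strategy $A$; a strategy's payoff is felt with delay $\tau$ with probability $p$ and without delay with probability $1-p$. The linearization at $s^*$ (with $x=s-s^*$) is $\dot x(t)=-(1-p)\delta\gamma x(t)-p\delta\gamma x(t-\tau)$, with characteristic equation $\lambda+(1-p)\delta\gamma+p\delta\gamma e^{-\lambda\tau}=0$. Asymptotic stability means all characteristic roots have negative real part; a Hopf bifurcation at $\tau_{cr}$ means a pair of characteristic roots $\pm i w_0$, $w_0>0$, lies on the imaginary axis at $\tau=\tau_{cr}$ and crosses it transversally into the right half-plane as $\tau$ increases. *)

(* Defs.v *)
From Stdlib Require Import Reals.
From Coquelicot Require Import Coquelicot.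
Open Scope R_scope.

Definition delta1 (b d : R) : R := (b - d).
Definition delta2 (a c : R) : R := c - a.
Definition delta (a b c d : R) : R := delta1 b d + delta2 a c.
Definition sstar (a b c d : R) : R := delta1 b d / delta a b c d.
Definition gam (a b c d : R) : R := sstar a b c d * (1 - sstar a b c d).

Definition Cexp (z : C) : C :=
  (exp (Re z) * cos (Im z), exp (Re z) * sin (Im z)).

(* Characteristic function of the linearization at s*:
   lambda + (1-p) delta gamma + p delta gamma e^{-lambda tau}. *)
Definition charfun (p dl g tau : R) (lam : C) : C :=
  (lam + RtoC ((1 - p) * dl * g) + RtoC (p * dl * g) * Cexp (- (lam * RtoC tau)))%C.

Definition asympt_stable (p dl g tau : R) : Prop :=
  forall lam : C, charfun p dl g tau lam = 0%C -> Re lam < 0.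

Definition hopf_at (p dl g taucr : R) : Prop :=
  exists w0 : R, 0 < w0 /\
    charfun p dl g taucr (0, w0) = 0%C /\
    charfun p dl g taucr (0, - w0) = 0%C /\
    exists (eps : R) (lam : R -> C), 0 < eps /\
      lam taucr = (0, w0) /\
      (forall tau, Rabs (tau - taucr) < eps -> charfun p dl g tau (lam tau) = 0%C) /\
      continuous lam taucr /\
      exists r : R, 0 < r /\ is_derive (fun tau => Re (lam tau)) taucr r.

Definition tau_cr (a b c d p : R) : R :=
  acos (- ((1 - p) / p)) / (delta a b c d * gam a b c d * sqrt (2 * p - 1)).

(* Main.v *)
Require Import Defs.
From Stdlib Require Import Reals Lra Psatz ClassicalEpsilon.
From Coquelicot Require Import Coquelicot.
Open Scope R_scope.

Lemma charfun_eq p dl g tau x y :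
  charfun p dl g tau (x, y) =
  (x + (1 - p) * dl * g + p * dl * g * (exp (- (x * tau)) * cos (y * tau)),
   y - p * dl * g * (exp (- (x * tau)) * sin (y * tau))).
Proof.
  unfold charfun, Cexp. simpl.
  unfold Cplus, Cmult, Copp, RtoC; simpl.
  rewrite cos_neg, sin_neg.
  replace (x * tau - y * 0) with (x * tau) by ring.
  replace (x * 0 + y * tau) with (y * tau) by ring.
  f_equal; ring.
Qed.

Lemma root_eqs p dl g tau x y :
  charfun p dl g tau (x, y) = 0%C ->
  x + (1 - p) * dl * g + p * dl * g * (exp (- (x * tau)) * cos (y * tau)) = 0 /\
  y - p * dl * g * (exp (- (x * tau)) * sin (y * tau)) = 0.
Proof. rewrite charfun_eq. intro H. injection H. auto. Qed.

Lemma root_intro p dl g tau x y :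
  x + (1 - p) * dl * g + p * dl * g * (exp (- (x * tau)) * cos (y * tau)) = 0 ->
  y - p * dl * g * (exp (- (x * tau)) * sin (y * tau)) = 0 ->
  charfun p dl g tau (x, y) = 0%C.
Proof. intros H1 H2. rewrite charfun_eq, H1, H2. reflexivity. Qed.

Lemma part1 p dl g tau : 0 < dl * g -> 0 <= p <= 1/2 -> 0 <= tau ->
  asympt_stable p dl g tau.
Proof.
  intros Hk Hp Ht [x y] H. simpl.
  apply root_eqs in H. destruct H as [H1 H2].
  apply Rnot_le_lt. intro Hx.
  set (k := dl * g) in *.
  set (E := exp (- (x * tau))) in *.
  set (c := cos (y * tau)) in *. set (s := sin (y * tau)) in *.
  assert (HE0 : 0 < E) by apply exp_pos.
  assert (HE1 : E <= 1).
  { unfold E. rewrite <- exp_0. destruct (Req_dec (x*tau) 0) as [Hz|Hz].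
    - rewrite Hz, Ropp_0. lra.
    - left. apply exp_increasing. assert (0 <= x * tau) by nra. lra. }
  assert (Hcs : c * c + s * s = 1).
  { pose proof (sin2_cos2 (y * tau)). unfold Rsqr in H. fold c s in H. lra. }
  replace ((1 - p) * dl * g) with ((1-p) * k) in H1 by (unfold k; ring).
  replace (p * dl * g) with (p * k) in H1, H2 by (unfold k; ring).
  assert (Hm : (x + (1-p)*k)^2 + y^2 = (p*k*E)^2).
  { replace (x + (1-p)*k) with (- (p*k*E*c)) by lra.
    replace y with (p*k*E*s) by lra. 
    replace ((- (p * k * E * c)) ^ 2 + (p * k * E * s) ^ 2) with ((p*k*E)^2 * (c*c+s*s)) by ring.
    rewrite Hcs. ring. }
  assert (HB : p * k * E <= p * k) by (assert (0 <= p*k) by nra; nra).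
  assert (HAB : p * k <= (1-p) * k) by nra.
  assert (HA : (1-p)*k <= x + (1-p)*k) by lra.
  assert (HBE : 0 <= p * k * E) by (assert (0 <= p*k) by nra; nra).
  assert (Hsq1 : (p*k*E)^2 <= ((1-p)*k)^2) by (simpl; nra).
  assert (Hsq2 : ((1-p)*k)^2 <= (x + (1-p)*k)^2) by (simpl; nra).
  assert (Hy2 : y^2 <= 0) by lra.
  assert (Hy : y = 0) by nra.
  assert (Hx2 : (x + (1-p)*k)^2 = ((1-p)*k)^2) by (subst y; simpl in *; lra).
  assert (Hx0 : x = 0) by nra.
  subst y x. unfold c, E in H1. rewrite !Rmult_0_l, Ropp_0, exp_0, cos_0 in H1. nra.
Qed.


Lemma cont_eps (f : R -> R) x0 : continuity_pt f x0 ->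
  forall eps, 0 < eps -> exists d, 0 < d /\ forall x, Rabs (x - x0) < d -> Rabs (f x - f x0) < eps.
Proof.
  intros Hc eps He.
  unfold continuity_pt, continue_in, limit1_in, limit_in, D_x, no_cond, dist in Hc.
  simpl in Hc. unfold R_dist in Hc.
  destruct (Hc eps He) as [a [Ha H]].
  exists a; split; auto. intros x Hx.
  destruct (Req_dec x x0) as [->|Hne].
  - rewrite Rminus_eq_0, Rabs_R0; auto.
  - apply H; auto.
Qed.

Lemma deriv_cont (f : R -> R) x0 l : is_derive f x0 l -> continuity_pt f x0.
Proof.
  intro H. apply is_derive_Reals in H.
  apply derivable_continuous_pt. exists l. exact H.
Qed.

Lemma ift1 (g psi dpsi : R -> R) (t0 x0 e dg : R) :
 0 < e -> g t0 + psi x0 = 0 ->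
 (forall x, Rabs (x - x0) < e -> is_derive psi x (dpsi x)) ->
 continuity_pt dpsi x0 -> 0 < dpsi x0 -> is_derive g t0 dg ->
 exists eps, 0 < eps /\ exists f : R -> R, f t0 = x0 /\
   (forall t, Rabs (t - t0) < eps -> g t + psi (f t) = 0 /\ Rabs (f t - x0) < e) /\
   is_derive f t0 (- dg / dpsi x0).
Proof.
  intros He H0 Hd Hcd Hc0 Hg.
  set (c0 := dpsi x0) in *.
  destruct (cont_eps _ _ Hcd (c0/2)) as [a1 [Ha1 Hda1]]; [lra|].
  set (eta := Rmin a1 e).
  assert (Heta : 0 < eta) by (apply Rmin_pos; lra).
  assert (Heta1 : eta <= a1) by apply Rmin_l.
  assert (Heta2 : eta <= e) by apply Rmin_r.
  set (r := eta / 2).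
  assert (Hr : 0 < r) by (unfold r; lra).
  assert (Hpos : forall x, Rabs (x - x0) < eta -> c0/2 < dpsi x).
  { intros x Hx. specialize (Hda1 x ltac:(lra)). apply Rabs_def2 in Hda1. fold c0 in Hda1. lra. }
  assert (Hmvt : forall z, Rabs (z - x0) <= r -> exists c, psi z - psi x0 = dpsi c * (z - x0) /\ Rabs (c - x0) <= Rabs (z - x0)).
  { intros z Hz. apply (MVT_cor4 psi dpsi x0 r); auto.
    intros c Hc. apply Hd. unfold r in Hc; lra. }
  assert (Hlow : forall z, Rabs (z - x0) <= r -> c0/2 * Rabs (z - x0) <= Rabs (psi z - psi x0)).
  { intros z Hz. destruct (Hmvt z Hz) as [c [Hc1 Hc2]]. rewrite Hc1, Rabs_mult.
    assert (c0/2 < dpsi c) by (apply Hpos; unfold r in *; lra).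
    rewrite (Rabs_right (dpsi c)) by lra.
    apply Rmult_le_compat_r; [apply Rabs_pos| lra]. }
  assert (Hplus : psi (x0 + r) - psi x0 >= c0/2 * r).
  { destruct (Hmvt (x0 + r)) as [c [Hc1 Hc2]].
    { replace (x0 + r - x0) with r by ring. rewrite Rabs_right; lra. }
    replace (x0 + r - x0) with r in Hc1, Hc2 by ring.
    assert (Rabs r = r) by (apply Rabs_right; lra).
    assert (c0/2 < dpsi c) by (apply Hpos; unfold r in *; lra). nra. }
  assert (Hminus : psi (x0 - r) - psi x0 <= - (c0/2 * r)).
  { destruct (Hmvt (x0 - r)) as [c [Hc1 Hc2]].
    { replace (x0 - r - x0) with (-r) by ring. rewrite Rabs_Ropp, Rabs_right; lra. }
    replace (x0 - r - x0) with (-r) in Hc1, Hc2 by ring.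
    assert (Rabs (-r) = r) by (rewrite Rabs_Ropp; apply Rabs_right; lra).
    assert (c0/2 < dpsi c) by (apply Hpos; unfold r in *; lra). nra. }
  assert (Hgc : continuity_pt g t0) by (eapply deriv_cont; eauto).
  destruct (cont_eps _ _ Hgc (c0/2*r)) as [a2 [Ha2 Hga2]]; [nra|].
  assert (Hex : forall t, exists z, Rabs (t - t0) < a2 -> Rabs (z - x0) <= r /\ g t + psi z = 0).
  { intros t. destruct (Rlt_dec (Rabs (t - t0)) a2) as [Ht|Ht].
    - specialize (Hga2 t Ht). apply Rabs_def2 in Hga2.
      destruct (Ranalysis5.IVT_interv (fun z => g t + psi z) (x0 - r) (x0 + r)) as [z [Hz1 Hz2]].
      + intros a Ha. apply (continuity_pt_plus (fun _ => g t) psi).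
        * apply continuity_pt_const. intros u v; reflexivity.
        * eapply deriv_cont. apply Hd. apply Rabs_def1; unfold r in *; lra.
      + lra.
      + lra.
      + lra.
      + exists z. intros _. split; auto. apply Rabs_le; lra.
    - exists x0. intros Hf; lra. }
  set (f := fun t => proj1_sig (constructive_indefinite_description _ (Hex t))).
  assert (Hf : forall t, Rabs (t - t0) < a2 -> Rabs (f t - x0) <= r /\ g t + psi (f t) = 0).
  { intro t. unfold f. destruct (constructive_indefinite_description _ (Hex t)) as [z Hz]. simpl. exact Hz. }
  assert (Hbound : forall t, Rabs (t - t0) < a2 -> c0/2 * Rabs (f t - x0) <= Rabs (g t - g t0)).
  { intros t Ht. destruct (Hf t Ht) as [Hf1 Hf2].
    replace (g t - g t0) with (-(psi (f t) - psi x0)) by lra.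
    rewrite Rabs_Ropp. apply Hlow; auto. }
  assert (Hft0 : f t0 = x0).
  { assert (Ht0 : Rabs (t0 - t0) < a2) by (rewrite Rminus_eq_0, Rabs_R0; lra).
    specialize (Hbound t0 Ht0). rewrite Rminus_eq_0, Rabs_R0 in Hbound.
    assert (Rabs (f t0 - x0) = 0).
    { pose proof (Rabs_pos (f t0 - x0)). nra. }
    apply Rabs_eq_0 in H. lra. }
  exists a2. split; auto. exists f. split; [exact Hft0|]. split.
  { intros t Ht. destruct (Hf t Ht) as [Hf1 Hf2]. split; auto. unfold r in *; lra. }
  apply is_derive_Reals. intros eps Heps.
  apply is_derive_Reals in Hg.
  destruct (Hg (eps * c0 / 4)) as [d1 Hd1].
  { apply Rmult_lt_0_compat; [nra|lra]. }
  assert (Hdg1 : 0 < Rabs dg + 1) by (pose proof (Rabs_pos dg); lra).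
  destruct (cont_eps _ _ Hcd (eps * c0 * c0 / (4 * (Rabs dg + 1)))) as [a3 [Ha3 Hda3]].
  { apply Rdiv_lt_0_compat; [|lra]. apply Rmult_lt_0_compat; [nra|lra]. }
  destruct (cont_eps _ _ Hgc (c0 / 2 * a3)) as [a4 [Ha4 Hga4]]; [nra|].
  assert (Hd1p := cond_pos d1).
  exists (mkposreal (Rmin d1 (Rmin a2 a4)) ltac:(apply Rmin_pos; [lra| apply Rmin_pos; lra])).
  simpl. intros h Hh0 Hh.
  assert (Hh1 : Rabs h < d1) by (eapply Rlt_le_trans; [exact Hh| apply Rmin_l]).
  assert (Hh2 : Rabs h < a2) by (eapply Rlt_le_trans; [exact Hh| eapply Rle_trans; [apply Rmin_r| apply Rmin_l]]).
  assert (Hh4 : Rabs h < a4) by (eapply Rlt_le_trans; [exact Hh| eapply Rle_trans; [apply Rmin_r| apply Rmin_r]]).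
  set (t := t0 + h).
  assert (Ht : Rabs (t - t0) < a2) by (unfold t; replace (t0 + h - t0) with h by ring; auto).
  assert (Ht4 : Rabs (t - t0) < a4) by (unfold t; replace (t0 + h - t0) with h by ring; auto).
  destruct (Hf t Ht) as [Hf1 Hf2].
  destruct (Hmvt (f t) Hf1) as [c [Hc1 Hc2]].
  assert (HD : c0/2 < dpsi c) by (apply Hpos; unfold r in *; lra).
  specialize (Hbound t Ht). specialize (Hga4 t Ht4).
  assert (Hca3 : Rabs (c - x0) < a3).
  { assert (c0 / 2 * Rabs (f t - x0) < c0 / 2 * a3) by lra.
    assert (Rabs (f t - x0) < a3) by (apply Rmult_lt_reg_l with (c0/2); lra). lra. }
  specialize (Hda3 c Hca3). fold c0 in Hda3.
  specialize (Hd1 h Hh0 Hh1). fold t in Hd1.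
  rewrite Hft0.
  set (D := dpsi c) in *. set (q := (g t - g t0) / h) in *.
  assert (Hq : f t - x0 = - (q * h) / D).
  { unfold q.
    assert (psi (f t) - psi x0 = - (g t - g t0)) by lra.
    rewrite Hc1 in H. apply Rmult_eq_reg_l with D; [|lra].
    field_simplify; try lra. }
  replace ((f t - x0) / h - - dg / c0) with ((dg * (D - c0) + c0 * (dg - q)) / (D * c0)).
  2:{ rewrite Hq. field. repeat split; lra. }
  rewrite Rabs_div by nra.
  rewrite (Rabs_right (D * c0)) by nra.
  apply Rle_lt_trans with ((Rabs dg * Rabs (D - c0) + c0 * Rabs (dg - q)) / (D * c0)).
  { unfold Rdiv. apply Rmult_le_compat_r.
    { left; apply Rinv_0_lt_compat; nra. }
    eapply Rle_trans; [apply Rabs_triang|]. rewrite !Rabs_mult, (Rabs_right c0) by lra. lra. }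
  assert (HDc : Rabs (D - c0) < eps * c0 * c0 / (4 * (Rabs dg + 1))) by exact Hda3.
  assert (Hqd : Rabs (dg - q) < eps * c0 / 4) by (rewrite Rabs_minus_sym; exact Hd1).
  assert (Hk : Rabs dg * (eps * c0 * c0 / (4 * (Rabs dg + 1))) <= eps * c0 * c0 / 4).
  { unfold Rdiv. rewrite Rinv_mult. 
    assert (0 < / (Rabs dg + 1)) by (apply Rinv_0_lt_compat; lra).
    assert (Rabs dg * / (Rabs dg + 1) <= 1).
    { apply Rmult_le_reg_r with (Rabs dg + 1); [lra|].
      rewrite Rmult_assoc, Rinv_l by lra. lra. }
    assert (0 < eps * c0 * c0 * / 4).
    { repeat apply Rmult_lt_0_compat; try lra; apply Rinv_0_lt_compat; lra. }
    replace (Rabs dg * (eps * c0 * c0 * (/ 4 * / (Rabs dg + 1)))) with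
      ((Rabs dg * / (Rabs dg + 1)) * (eps * c0 * c0 * / 4)) by ring. nra. }
  apply Rmult_lt_reg_r with (D * c0); [nra|].
  unfold Rdiv. rewrite Rmult_assoc, Rinv_l, Rmult_1_r by nra.
  pose proof (Rabs_pos dg). pose proof (Rabs_pos (D - c0)).
  assert (Rabs dg * Rabs (D - c0) <= Rabs dg * (eps * c0 * c0 / (4 * (Rabs dg + 1))))
    by (apply Rmult_le_compat_l; lra).
  assert (c0 * Rabs (dg - q) < c0 * (eps * c0 / 4)) by (apply Rmult_lt_compat_l; lra).
  assert (eps * c0 * (c0/2) < eps * c0 * D) by (apply Rmult_lt_compat_l; nra).
  nra.
Qed.

Lemma cont_pair (u v : R -> R) x : continuous u x -> continuous v x ->
  continuous (fun t => (u t, v t) : C) x.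
Proof.
  intros Hu Hv. apply filterlim_locally. intros eps.
  apply filterlim_locally with (eps:=eps) in Hu.
  apply filterlim_locally with (eps:=eps) in Hv.
  generalize (filter_and _ _ Hu Hv). apply filter_imp. intros t [H1 H2]. split; assumption.
Qed.

Lemma ln3 a b c : 0 < a -> 0 < b -> 0 < c -> ln a + ln b + ln c = ln (a * b * c).
Proof. intros. rewrite !ln_mult; try lra; apply Rmult_lt_0_compat; lra. Qed.

Definition psiF (B A : R) (th : R) := ln (sin th / th) + th * cos th / sin th.

Lemma part2 p dl g : 0 < dl * g -> 1/2 < p <= 1 ->
  hopf_at p dl g (acos (- ((1 - p) / p)) / (dl * g * sqrt (2 * p - 1))).
Proof.
  intros Hk Hp.
  set (k := dl * g) in *.
  set (sq := sqrt (2 * p - 1)).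
  assert (Hsq0 : 0 < sq) by (apply sqrt_lt_R0; lra).
  assert (Hsq : sq * sq = 2 * p - 1) by (apply sqrt_sqrt; lra).
  set (u := - ((1 - p) / p)).
  assert (Hu : -1 < u <= 0).
  { unfold u. assert (Hip : p * / p = 1) by (field; lra).
    assert (0 < / p) by (apply Rinv_0_lt_compat; lra).
    unfold Rdiv. split; nra. }
  set (th0 := acos u).
  assert (Hth0 : 0 < th0 < PI) by (apply acos_bound_lt; lra).
  assert (Hc0 : cos th0 = u) by (apply cos_acos; lra).
  assert (Hs0 : sin th0 = sq / p).
  { unfold th0. rewrite sin_acos by lra.
    replace (1 - u²) with (Rsqr (sq / p)).
    - apply sqrt_Rsqr. apply Rlt_le, Rdiv_lt_0_compat; lra.
    - unfold Rsqr, u. replace (sq / p * (sq / p)) with ((sq * sq) / (p * p)) by (field; lra).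
      rewrite Hsq. field. lra. }
  set (A := (1 - p) * k). set (B := p * k).
  set (w := k * sq).
  assert (Hw : 0 < w) by (unfold w; nra).
  assert (HB : 0 < B) by (unfold B; nra).
  assert (HA : 0 <= A) by (unfold A; nra).
  assert (HBs : B * sin th0 = w) by (rewrite Hs0; unfold B, w; field; lra).
  assert (HBc : B * cos th0 = - A) by (rewrite Hc0; unfold B, A, u; field; lra).
  replace (dl * g * sqrt (2 * p - 1)) with w by (unfold w, k, sq; ring).
  set (t0 := th0 / w).
  assert (Ht0 : 0 < t0) by (unfold t0; apply Rdiv_lt_0_compat; lra).
  assert (Hwt0 : w * t0 = th0) by (unfold t0; field; lra).
  assert (Hsin0 : 0 < sin th0) by (apply sin_gt_0; lra).
  exists w. split; [exact Hw|]. split; [|split].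
  assert (EB : p * dl * g = B) by (unfold B, k; ring).
  assert (EA : (1 - p) * dl * g = A) by (unfold A, k; ring).
  { apply root_intro; rewrite ?EA, ?EB, Rmult_0_l, Ropp_0, exp_0, Rmult_1_l, Hwt0; lra. }
  { apply root_intro; rewrite Rmult_0_l, Ropp_0, exp_0, Rmult_1_l;
    replace (- w * t0) with (- th0) by (rewrite <- Hwt0; ring); rewrite ?cos_neg, ?sin_neg;
    replace (p * dl * g) with B by (unfold B, k; ring); try replace ((1 - p) * dl * g) with A by (unfold A, k; ring); lra. }
  set (e := Rmin th0 (PI - th0) / 2).
  assert (He : 0 < e) by (unfold e; assert (0 < Rmin th0 (PI - th0)) by (apply Rmin_pos; lra); lra).
  assert (Hbox : forall x, Rabs (x - th0) < e -> 0 < x < PI).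
  { intros x Hx. apply Rabs_def2 in Hx.
    assert (Rmin th0 (PI - th0) <= th0) by apply Rmin_l.
    assert (Rmin th0 (PI - th0) <= PI - th0) by apply Rmin_r. unfold e in Hx. lra. }
  destruct (ift1 (fun t => - (ln t + ln B + A * t))
                 (fun th => - (ln (sin th / th) + th * cos th / sin th))
                 (fun th => - (2 * cos th / sin th - 1 / th - th / (sin th * sin th)))
                 t0 th0 e (- (1 / t0 + A))) as [eps [Heps [f [Hf0 [Hf Hfd]]]]].
  - exact He.
  - assert (HN : ln t0 + ln B + ln (sin th0 / th0) = 0).
    { rewrite ln3; try lra. 2: apply Rdiv_lt_0_compat; lra.
      replace (t0 * B * (sin th0 / th0)) with 1. apply ln_1.
      unfold t0. replace (th0 / w * B * (sin th0 / th0)) with ((B * sin th0) / w) by (field; lra).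
      rewrite HBs. field. lra. }
    assert (HT : A * t0 + th0 * cos th0 / sin th0 = 0).
    { unfold t0. replace (cos th0) with (- A / B) by (rewrite <- HBc; field; lra).
      replace (sin th0) with (w / B) by (rewrite <- HBs; field; lra). field. repeat split; lra. }
    lra.
  - intros x Hx. destruct (Hbox x Hx) as [Hx1 Hx2].
    assert (0 < sin x) by (apply sin_gt_0; lra).
    auto_derive.
    + repeat split; try lra. apply Rmult_lt_0_compat; [lra| apply Rinv_0_lt_compat; lra].
    + assert (Hsc : cos x * cos x = 1 - sin x * sin x).
      { pose proof (sin2_cos2 x). unfold Rsqr in *. lra. }
      assert (E : x * cos x * (- (1 * cos x) * / (sin x * sin x)) = x - x / (sin x * sin x)).
      { replace (x * cos x * (- (1 * cos x) * / (sin x * sin x))) with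
          (- x * (cos x * cos x) / (sin x * sin x)) by (field; lra).
        rewrite Hsc. field. lra. }
      rewrite E. field. repeat split; lra.
  - apply derivable_continuous_pt, ex_derive_Reals_0. auto_derive. repeat split; nra.
  - rewrite Hc0. assert (0 < 1 / th0) by (apply Rdiv_lt_0_compat; lra).
    assert (0 < th0 / (sin th0 * sin th0)) by (apply Rdiv_lt_0_compat; nra).
    assert (2 * u / sin th0 <= 0).
    { unfold Rdiv. assert (0 < / sin th0) by (apply Rinv_0_lt_compat; lra). nra. }
    lra.
  - auto_derive; [lra|]. field. lra.
  - cbv beta in Hf, Hfd.
    set (lam := fun t => ((ln t + ln B + ln (sin (f t) / f t)) / t, f t / t) : C).
    exists (Rmin eps (t0 / 2)), lam.
    assert (Heps' : 0 < Rmin eps (t0 / 2)) by (apply Rmin_pos; lra).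
    assert (HN0 : ln t0 + ln B + ln (sin th0 / th0) = 0).
    { rewrite ln3; try lra. 2: apply Rdiv_lt_0_compat; lra.
      replace (t0 * B * (sin th0 / th0)) with 1. apply ln_1.
      unfold t0. replace (th0 / w * B * (sin th0 / th0)) with ((B * sin th0) / w) by (field; lra).
      rewrite HBs. field. lra. }
    split; [exact Heps'|]. split.
    { unfold lam. rewrite Hf0, HN0. f_equal; unfold t0; field; lra. }
    split.
    { intros t Ht.
      assert (Hte : Rabs (t - t0) < eps) by (eapply Rlt_le_trans; [exact Ht| apply Rmin_l]).
      assert (Htt : Rabs (t - t0) < t0 / 2) by (eapply Rlt_le_trans; [exact Ht| apply Rmin_r]).
      apply Rabs_def2 in Htt.
      assert (Htp : 0 < t) by lra.
      destruct (Hf t Hte) as [Heq Hbx].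
      destruct (Hbox _ Hbx) as [Hth1 Hth2].
      set (th := f t) in *.
      assert (Hst : 0 < sin th) by (apply sin_gt_0; lra).
      set (N := ln t + ln B + ln (sin th / th)).
      assert (HNe : N = - (A * t) - th * cos th / sin th) by (unfold N; lra).
      assert (HexpN : exp N = t * B * (sin th / th)).
      { unfold N. rewrite ln3; try lra. 2: apply Rdiv_lt_0_compat; lra.
        apply exp_ln. apply Rmult_lt_0_compat; [nra| apply Rdiv_lt_0_compat; lra]. }
      unfold lam. fold th. fold N.
      apply root_intro.
      - replace (N / t * t) with N by (field; lra).
        replace (th / t * t) with th by (field; lra).
        rewrite exp_Ropp, HexpN.
        replace (p * dl * g) with B by (unfold B, k; ring).
        replace ((1 - p) * dl * g) with A by (unfold A, k; ring).
        rewrite HNe. field. repeat split; lra.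
      - replace (N / t * t) with N by (field; lra).
        replace (th / t * t) with th by (field; lra).
        rewrite exp_Ropp, HexpN.
        replace (p * dl * g) with B by (unfold B, k; ring).
        field. repeat split; lra. }
    set (D := - (2 * cos th0 / sin th0 - 1 / th0 - th0 / (sin th0 * sin th0))) in Hfd.
    set (dth := - - (1 / t0 + A) / D) in Hfd.
    set (dphi := cos th0 / sin th0 - 1 / th0).
    assert (Hphi : is_derive (fun th => ln (sin th / th)) th0 dphi).
    { unfold dphi. auto_derive.
      - repeat split; try lra. apply Rdiv_lt_0_compat; lra.
      - field. repeat split; lra. }
    assert (HNd : is_derive (fun t => ln t + ln B + ln (sin (f t) / f t)) t0 (1 / t0 + dth * dphi)).
    { apply (is_derive_plus (fun t => ln t + ln B) (fun t => ln (sin (f t) / f t))).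
      - auto_derive; [lra|]. field. lra.
      - apply (is_derive_comp (fun th => ln (sin th / th)) f). rewrite Hf0. exact Hphi. exact Hfd. }
    assert (Hid : is_derive (fun t : R => t) t0 1) by (auto_derive; try reflexivity).
    assert (HRe : is_derive (fun t => Re (lam t)) t0 (((1 / t0 + dth * dphi) * t0 - (ln t0 + ln B + ln (sin (f t0) / f t0)) * 1) / t0 ^ 2)).
    { unfold lam. simpl.
      apply (is_derive_div (fun t => ln t + ln B + ln (sin (f t) / f t)) (fun t => t)); [exact HNd| exact Hid| lra]. }
    split.
    { assert (Hc1 : continuous (fun t => Re (lam t)) t0)
        by (apply continuity_pt_filterlim; eapply deriv_cont; exact HRe).
      unfold lam. apply cont_pair.
      - exact Hc1.
      - apply continuity_pt_filterlim. eapply deriv_cont.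
        apply (is_derive_div f (fun t => t)); [exact Hfd| exact Hid| lra]. }
    eexists. split; [|exact HRe]. rewrite Hf0, HN0.
    assert (Hcos : cos th0 = - A / B) by (rewrite <- HBc; field; lra).
    assert (Hsin : sin th0 = w / B) by (rewrite <- HBs; field; lra).
    assert (HBA : B * B - A * A = w * w).
    { unfold B, A, w. replace (k * sq * (k * sq)) with (k * k * (sq * sq)) by ring.
      rewrite Hsq. ring. }
    assert (HDn : 0 < 1 + 2 * A * t0 + t0 * t0 * B * B) by nra.
    unfold dth, D, dphi. rewrite Hcos, Hsin, <- Hwt0.
    replace (((1 / t0 + - - (1 / t0 + A) / - (2 * (- A / B) / (w / B) - 1 / (w * t0) - w * t0 / (w / B * (w / B))) *
       (- A / B / (w / B) - 1 / (w * t0))) * t0 - 0 * 1) / t0 ^ 2)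
      with ((B * B - A * A) / (1 + 2 * A * t0 + t0 * t0 * B * B)).
    { rewrite HBA. apply Rdiv_lt_0_compat; nra. }
    field. repeat split; try lra.
Qed.

Theorem proposition4 (a b c d p : R) :
  0 < delta1 b d -> 0 < delta2 a c -> 0 <= p <= 1 ->
  (p <= 1/2 -> forall tau : R, 0 <= tau ->
      asympt_stable p (delta a b c d) (gam a b c d) tau) /\
  (1/2 < p -> hopf_at p (delta a b c d) (gam a b c d) (tau_cr a b c d p)).
Proof.
  intros H1 H2 Hp.
  assert (Hd : 0 < delta a b c d) by (unfold delta; lra).
  assert (Hs1 : 0 < sstar a b c d) by (unfold sstar; apply Rdiv_lt_0_compat; lra).
  assert (Hs2 : sstar a b c d < 1).
  { unfold sstar. apply Rmult_lt_reg_r with (delta a b c d); [lra|].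
    unfold Rdiv. rewrite Rmult_assoc, Rinv_l by lra. unfold delta. lra. }
  assert (Hg : 0 < gam a b c d) by (unfold gam; apply Rmult_lt_0_compat; lra).
  assert (Hk : 0 < delta a b c d * gam a b c d) by (apply Rmult_lt_0_compat; lra).
  split.
  - intros Hp2 tau Ht. apply part1; auto. lra.
  - intros Hp2. unfold tau_cr. apply part2; [exact Hk| lra].
Qed.
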